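(* Let $G$ be a $k$-uniform $s$-cycle with $k\ge 3$ and $1\le s<\frac{k}{2}$. Then $\lambda(\mathcal{Q})=2+2\alpha_*^{k-2s}$, where $\alpha_*$ is the unique root in $(0,1)$ of $2\alpha^k+\alpha^{2s}-1=0$. When $k$ is even, also $\lambda(\mathcal{L})=2+2\alpha_*^{k-2s}$.
   Context: A $k$-uniform $s$-cycle with $m$ edges has vertex set $\mathbb{Z}_n$, $n=m(k-s)$ (vertex $n+i$ identified with $i$), and edges $e_j=\{j(k-s)+1,\ldots,j(k-s)+k\}$, $j=0,\ldots,m-1$; it is assumed that $n\ge 2k-s$. The degree $d_i$ of a vertex is the number of edges containing it. For a real tensor $\mathcal{T}$ of order $k$ and dimension $n$, $\lambda\in\mathbb{R}$ is an H-eigenvalue if there is nonzero $\mathbf{x}\in\mathbb{R}^n$ with $(\mathcal{T}\mathbf{x}^{k-1})_i=\lambda x_i^{k-1}$ for all $i$, where $(\mathcal{T}\mathbf{x}^{k-1})_i=\sum_{i_2,\ldots,i_k}t_{ii_2\ldots i_k}x_{i_2}\cdots x_{i_k}$; $\lambda(\mathcal{T})$ is the largest H-eigenvalue. The adjacency tensor $\mathcal{A}$ has entries $1/(k-1)!$ at $(i_1,\ldots,i_k)$ with $\{i_1,\ldots,i_k\}$ an edge and $0$ otherwise; $\mathcal{D}$ is diagonal with entries $d_i$; $\mathcal{L}=\mathcal{D}-\mathcal{A}$ (Laplacian tensor), $\mathcal{Q}=\mathcal{D}+\mathcal{A}$ (signless Laplacian tensor). Equivalently the H-eigen-equations read $\lambda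 x_i^{k-1}=d_ix_i^{k-1}\mp\sum_{e\ni i}\prod_{j\in e\setminus\{i\}}x_j$ (minus for $\mathcal{L}$, plus for $\mathcal{Q}$). *)

(* Defs.v *)
From HB Require Import structures.
From mathcomp Require Import all_boot all_order all_algebra.
From mathcomp Require Import reals.
Unset Printing Implicit Defensive.
Import Order.TTheory GRing.Theory Num.Theory.
Local Open Scope ring_scope.

(* k-uniform s-cycle with m edges: vertex set Z_n, n = m(k-s), represented by
   'I_(m*(k-s)); vertex n+i is identified with i (reduction mod n). *)
Definition scycle_edge (k s m : nat) (j : nat) : {set 'I_(m * (k - s))} :=
  [set v : 'I_(m * (k - s)) |
     [exists t : 'I_k, nat_of_ord v == ((j * (k - s) + t.+1) %% (m * (k - s)))%N]].

Definition scycle_deg (k s m : nat) (i : 'I_(m * (k - s))) : nat :=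
  #|[set j : 'I_m | i \in scycle_edge k s m j]|.

(* H-eigen-equations of D + sgn * A, written in the (equivalent) hypergraph form
     lam x_i^{k-1} = d_i x_i^{k-1} + sgn * sum_{e ∋ i} prod_{j in e \ i} x_j.
   sgn = 1 : signless Laplacian tensor Q = D + A;
   sgn = -1 : Laplacian tensor L = D - A. *)
Definition scycle_Heigvec {R : realType} (k s m : nat) (sgn lam : R)
    (x : 'I_(m * (k - s)) -> R) : Prop :=
  (exists i, x i != 0) /\
  forall i : 'I_(m * (k - s)),
    lam * x i ^+ (k - 1) =
      (scycle_deg k s m i)%:R * x i ^+ (k - 1)
      + sgn * \sum_(j < m | i \in scycle_edge k s m j)
                \prod_(v in scycle_edge k s m j :\ i) x v.

Definition scycle_Heig {R : realType} (k s m : nat) (sgn lam : R) : Prop :=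
  exists x : 'I_(m * (k - s)) -> R, scycle_Heigvec k s m sgn lam x.

Definition scycle_largest_Heig {R : realType} (k s m : nat) (sgn lam : R) : Prop :=
  scycle_Heig k s m sgn lam /\ forall mu : R, scycle_Heig k s m sgn mu -> mu <= lam.

Definition lambdaQ_is {R : realType} (k s m : nat) (lam : R) : Prop :=
  scycle_largest_Heig k s m 1 lam.

Definition lambdaL_is {R : realType} (k s m : nat) (lam : R) : Prop :=
  scycle_largest_Heig k s m (-1) lam.

(* Main.v *)
Require Import Defs.
From HB Require Import structures.
From mathcomp Require Import all_boot all_order all_algebra.
From mathcomp Require Import reals.
From mathcomp Require Import zify ring lra polyrcf.
Import Order.TTheory GRing.Theory Num.Theory.
Local Open Scope ring_scope.

Lemma uniq_dm (q a b c d : nat) : (c < q)%N -> (d < q)%N ->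
  (a * q + c = b * q + d)%N -> a = b /\ c = d.
Proof.
move=> hc hd e; have q0 : (0 < q)%N by lia.
split.
- have := congr1 (divn^~ q) e; by rewrite /= !divnMDl // !divn_small // !addn0.
- have := congr1 (modn^~ q) e; by rewrite /= !modnMDl !modn_small.
Qed.

Arguments uniq_dm {q a b c d}.

Lemma memE_nat (k s m j v : nat) : (1 <= s)%N -> (2 * s < k)%N -> (j < m)%N ->
  (v < m * (k - s))%N ->
  [exists t : 'I_k, v == (j * (k - s) + t.+1) %% (m * (k - s))]%N =
  (j == (v + (m * (k - s)).-1) %% (m * (k - s)) %/ (k - s))%N ||
  (((v + (m * (k - s)).-1) %% (m * (k - s)) %% (k - s) < s)%N &&
   (j.+1 %% m == (v + (m * (k - s)).-1) %% (m * (k - s)) %/ (k - s))%N).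
Proof.
move=> hs1 hs2 hj hv.
set q := (k - s)%N. set n := (m * q)%N.
have q0 : (0 < q)%N by rewrite /q; lia.
have sq : (s < q)%N by rewrite /q; lia.
have kq : (k = q + s)%N by rewrite /q; lia.
have n0 : (0 < n)%N by lia.
have key : forall t, (v == (j*q + t.+1) %% n)%N = ((v + n.-1) %% n == (j*q + t) %% n)%N.
  move=> t; rewrite -{1}(modn_small hv) -[LHS](eqn_modDr n.-1).
  have -> : (j * q + t.+1 + n.-1 = j * q + t + n)%N by lia.
  by rewrite modnDr.
set u := ((v + n.-1) %% n)%N.
have un : (u < n)%N by rewrite ltn_pmod.
have ue : u = (u %/ q * q + u %% q)%N by rewrite -divn_eq.
have am : (u %/ q < m)%N by rewrite ltn_divLR.
have cq : (u %% q < q)%N by rewrite ltn_pmod.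
set a := (u %/ q)%N. set c := (u %% q)%N.
have jqn : (j * q + q <= n)%N by rewrite addnC -mulSn /n leq_mul2r hj orbT.
apply/existsP/idP.
- case=> t; rewrite key -/u => /eqP hu.
  have ht0 := ltn_ord t.
  case: (ltnP t q) => ht.
  + have hlt : (j * q + t < n)%N by lia.
    rewrite modn_small // ue in hu.
    have [ea _] := uniq_dm cq ht hu. by rewrite /a ea eqxx.
  + have e1 : (j * q + t = j.+1 * q + (t - q))%N by rewrite mulSn; lia.
    have ht' : (t - q < s)%N by lia.
    case: (ltnP j.+1 m) => hjm.
    * have h2 : (j.+2 * q <= n)%N by rewrite /n leq_mul2r hjm orbT.
      rewrite mulSn in h2.
      have : (j.+1 * q + (t - q) < n)%N by lia.
      move=> hlt. rewrite e1 modn_small // ue in hu.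
      have [ea ec] := uniq_dm cq (ltn_trans ht' sq) hu.
      by rewrite /a /c ea ec ht' modn_small // eqxx orbT.
    * have hjm' : (j.+1 = m)%N by lia.
      rewrite e1 hjm' -/n -modnDm modnn add0n modn_mod modn_small in hu; last by lia.
      have hu' : (a * q + c = 0 * q + (t - q))%N by rewrite -ue hu.
      have [ea ec] := uniq_dm cq (ltn_trans ht' sq) hu'.
      rewrite -/c in ec; by rewrite ea ec ht' hjm' modnn eqxx orbT.
- move=> /orP [/eqP hj' | /andP [hc /eqP hj']].
  + have ck : (c < k)%N by lia.
    exists (Ordinal ck); rewrite key /= -/u hj' -ue modn_small //.
  + have ck : (q + c < k)%N by lia.
    exists (Ordinal ck); rewrite key /= -/u.
    case: (ltnP j.+1 m) => hjm.
    * rewrite modn_small // in hj'.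
      have -> : (j * q + (q + c) = a * q + c)%N by rewrite -hj' mulSn; lia.
      by rewrite -ue modn_small.
    * have hjm' : (j.+1 = m)%N by lia.
      rewrite hjm' modnn in hj'.
      have -> : (j * q + (q + c) = n + c)%N by rewrite /n -hjm' mulSn; lia.
      rewrite modnDl modn_small; last by lia.
      have ue2 : u = (a * q + c)%N by exact: ue.
      by rewrite {1}ue2 -hj' mul0n add0n.
Qed.

Definition cls (k s m v : nat) : nat := ((v + (m * (k - s)).-1) %% (k - s))%N.

Lemma jconv (j a m : nat) : (j < m)%N -> (a < m)%N ->
  (j.+1 %% m == a)%N = (j == (a + m.-1) %% m)%N.
Proof.
move=> hj ha.
rewrite -{1}(modn_small ha) -[LHS](eqn_modDr m.-1).
have -> : (j.+1 + m.-1 = j + m)%N by lia.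
by rewrite modnDr modn_small.
Qed.

Lemma deg_cls (k s m : nat) (v : 'I_(m * (k - s))) : (1 <= s)%N -> (2 * s < k)%N ->
  (2 < m)%N -> scycle_deg k s m v = if (cls k s m v < s)%N then 2%N else 1%N.
Proof.
move=> hs1 hs2 hm.
rewrite /scycle_deg /cls.
set q := (k - s)%N. set n := (m * q)%N.
have q0 : (0 < q)%N by rewrite /q; lia.
have m0 : (0 < m)%N by lia.
have n0 : (0 < n)%N by rewrite /n muln_gt0 m0 q0.
set u := ((v + n.-1) %% n)%N.
have cu : ((v + n.-1) %% q = u %% q)%N.
  by rewrite /u modn_dvdm // /n dvdn_mull.
have un : (u < n)%N by rewrite ltn_pmod.
have am : (u %/ q < m)%N by rewrite ltn_divLR.
pose A : 'I_m := Ordinal am.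
have bm : ((u %/ q + m.-1) %% m < m)%N by rewrite ltn_pmod.
pose B : 'I_m := Ordinal bm.
have mem : forall j : 'I_m, (v \in scycle_edge k s m j) = (j == A) || ((u %% q < s)%N && (j == B)).
  move=> j; rewrite inE memE_nat // -/q -/n -/u jconv //.
have AB : A != B.
  apply/negP => /eqP /(congr1 val) /= h.
  have : ((u %/ q + 0) == (u %/ q + m.-1) %[mod m])%N by rewrite addn0 modn_small // -h.
  rewrite eqn_modDl mod0n modn_small; lia.
rewrite cu; case: ifP => hc.
- have -> : [set j : 'I_m | v \in scycle_edge k s m j] = [set A; B].
    by apply/setP => j; rewrite in_set mem hc in_set2.
  by rewrite cards2 AB.
- have -> : [set j : 'I_m | v \in scycle_edge k s m j] = [set A].
    by apply/setP => j; rewrite in_set mem hc orbF in_set1.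
  by rewrite cards1.
Qed.

Lemma edge_imset (k s m : nat) (j : 'I_m) : (0 < k)%N -> (k <= m * (k - s))%N ->
  exists F : 'I_k -> 'I_(m * (k - s)),
    [/\ injective F, scycle_edge k s m j = [set F t | t in [set: 'I_k]] &
        forall t : 'I_k, nat_of_ord (F t) = ((j * (k - s) + t.+1) %% (m * (k - s)))%N].
Proof.
move=> k0 kn.
have n0 : (0 < m * (k - s))%N by lia.
pose F := fun t : 'I_k => Ordinal (ltn_pmod (j * (k - s) + t.+1) n0).
exists F; split => //.
- move=> t1 t2 /(congr1 val) /= /eqP.
  have h1 := ltn_ord t1; have h2 := ltn_ord t2.
  rewrite !addnS -!addSn eqn_modDl !modn_small; try lia.
  by move=> /eqP h; apply: val_inj.
- apply/setP => v; rewrite inE; apply/existsP/imsetP.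
  + by case=> t /eqP h; exists t => //; apply: val_inj.
  + by case=> t _ ->; exists t.
Qed.

Lemma edge_prod (R : realType) (k s m : nat) (j : 'I_m) (g : nat -> R) :
  (0 < k)%N -> (k <= m * (k - s))%N ->
  \prod_(v in scycle_edge k s m j) g v =
  \prod_(t < k) g ((j * (k - s) + t.+1) %% (m * (k - s)))%N.
Proof.
move=> k0 kn; have [F [Fi -> FE]] := @edge_imset k s m j k0 kn.
rewrite big_imset /=; last by move=> x y _ _; apply: Fi.
rewrite (eq_bigl (fun _ => true)) => [|t]; last by rewrite inE.
by apply: eq_bigr => t _; rewrite FE.
Qed.

Lemma edge_card (k s m : nat) (j : 'I_m) :
  (0 < k)%N -> (k <= m * (k - s))%N -> #|scycle_edge k s m j| = k.
Proof.
move=> k0 kn; have [F [Fi -> FE]] := @edge_imset k s m j k0 kn.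
by rewrite card_imset // cardsT card_ord.
Qed.

Lemma cls_vtx (k s m j t : nat) : (0 < k - s)%N -> (0 < m)%N ->
  cls k s m ((j * (k - s) + t.+1) %% (m * (k - s))) = (t %% (k - s))%N.
Proof.
move=> q0 m0; rewrite /cls.
set q := (k - s)%N. set n := (m * q)%N.
have n0 : (0 < n)%N by rewrite /n muln_gt0 m0 q0.
rewrite -modnDml modn_dvdm; last by rewrite /n dvdn_mull.
rewrite modnDml.
have -> : (j * q + t.+1 + n.-1 = (j + m) * q + t)%N by rewrite mulnDl /n; lia.
by rewrite modnMDl.
Qed.

Lemma modq (q s t : nat) : (t < q + s)%N -> (s <= q)%N ->
  (t %% q = if (t < q)%N then t else t - q)%N.
Proof.
move=> h1 h2; case: ifP => h; first by rewrite modn_small.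
have -> : t = ((t - q) + q)%N by lia.
rewrite modnDr modn_small; lia.
Qed.

Lemma prod_cnt (R : realType) (b : R) (k s : nat) : (1 <= s)%N -> (2 * s < k)%N ->
  \prod_(t < k) (if (t %% (k - s) < s)%N then 1 else b) = b ^+ (k - 2 * s).
Proof.
move=> hs1 hs2.
rewrite -(big_mkord xpredT (fun t => if (t %% (k - s) < s)%N then 1 else b)).
rewrite (big_cat_nat _ (n := s)) //=; last by lia.
rewrite (big_cat_nat _ (m := s) (n := (k - s)%N)) //=; try lia.
rewrite (eq_big_nat _ _ (F2 := fun _ => 1)); last first.
  by move=> i /andP [_ hi]; rewrite modn_small ?hi //; lia.
rewrite (eq_big_nat _ _ (m := s) (F2 := fun _ => b)); last first.
  move=> i /andP [h1 h2]; rewrite modn_small //.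
  by have -> : (i < s)%N = false by lia.
rewrite (eq_big_nat _ _ (m := (k - s)%N) (F2 := fun _ => 1)); last first.
  move=> i /andP [h1 h2]; rewrite (@modq (k - s) s i); try lia.
  have -> : (i < k - s)%N = false by lia.
  by have -> : (i - (k - s) < s)%N by lia.
rewrite !prodr_const_nat !expr1n mul1r mulr1.
by congr (_ ^+ _); lia.
Qed.

Lemma prod_sgn (R : realType) (k s : nat) : (1 <= s)%N -> (2 * s < k)%N ->
  \prod_(t < k) (if (t %% (k - s) == s)%N then -1 else 1) = -1 :> R.
Proof.
move=> hs1 hs2.
rewrite -(big_mkord xpredT (fun t => if (t %% (k - s) == s)%N then -1 else 1)).
rewrite (big_cat_nat _ (n := s)) //=; last by lia.
rewrite (big_cat_nat _ (m := s) (n := s.+1)) //=; try lia.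
rewrite big_nat1 modn_small; last by lia.
rewrite eqxx.
rewrite (eq_big_nat _ _ (F2 := fun _ => 1)); last first.
  move=> i /andP [_ hi]; rewrite modn_small; last by lia.
  by have -> : (i == s) = false by lia.
rewrite (eq_big_nat _ _ (m := s.+1) (F2 := fun _ => 1)); last first.
  move=> i /andP [h1 h2]; case: (ltnP i (k - s)) => h.
  - rewrite modn_small //; have -> : (i == s) = false by lia. by [].
  - have e : i = ((i - (k - s)) + (k - s))%N by lia.
    rewrite {1}e modnDr modn_small; last by lia.
    have -> : (i - (k - s) == s)%N = false by lia. by [].
by rewrite !prodr_const_nat !expr1n mul1r mulr1.
Qed.

Lemma sum_edges (R : realType) (k s m : nat) (X : 'I_(m * (k - s)) -> R) (Pe : R)
  (i : 'I_(m * (k - s))) : X i != 0 ->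
  (forall j : 'I_m, \prod_(v in scycle_edge k s m j) X v = Pe) ->
  \sum_(j < m | i \in scycle_edge k s m j) \prod_(v in scycle_edge k s m j :\ i) X v
   = (scycle_deg k s m i)%:R * (Pe / X i).
Proof.
move=> Xi HP.
transitivity (\sum_(j < m | i \in scycle_edge k s m j) (Pe / X i)).
  apply: eq_bigr => j hj.
  rewrite -(HP j) (bigD1 i hj) /= mulrC mulKf //.
  by apply: eq_bigl => v; rewrite in_setD1 andbC.
rewrite (eq_bigl (fun j => j \in [set j : 'I_m | i \in scycle_edge k s m j])); last first.
  by move=> j; rewrite in_set.
by rewrite sumr_const /scycle_deg mulr_natl.
Qed.

Lemma ub (R : realType) (k s m : nat) (Y : 'I_(m * (k - s)) -> R) (lamY sgn mu : R) :
  (forall i, 0 < Y i) ->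
  (forall i, lamY * Y i ^+ (k - 1) = (scycle_deg k s m i)%:R * Y i ^+ (k - 1)
      + \sum_(j < m | i \in scycle_edge k s m j) \prod_(v in scycle_edge k s m j :\ i) Y v) ->
  (forall i (j : 'I_m), i \in scycle_edge k s m j -> #|scycle_edge k s m j :\ i| = (k - 1)%N) ->
  `|sgn| = 1 -> scycle_Heig k s m sgn mu -> mu <= lamY.
Proof.
move=> Ypos HY Hcard Hsgn [x [[i0 xi0] Hx]].
pose F := fun i => `|x i| / Y i.
case: (@arg_maxP _ _ _ i0 xpredT F isT) => i _ Hmax.
set T := F i.
have HT : forall v, `|x v| <= T * Y v.
  move=> v; rewrite -ler_pdivrMr //; exact: Hmax.
have T0 : 0 < T.
  apply: (lt_le_trans _ (Hmax i0 isT)).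
  by rewrite /F divr_gt0 // normr_gt0.
have Yi0 : Y i != 0 by rewrite gt_eqF.
have xi : `|x i| = T * Y i by rewrite /T /F divfK.
have eq1 : (mu - (scycle_deg k s m i)%:R) * x i ^+ (k - 1) =
    sgn * \sum_(j < m | i \in scycle_edge k s m j) \prod_(v in scycle_edge k s m j :\ i) x v.
  by rewrite mulrBl Hx addrC addKr.
have eq2 := congr1 Num.norm eq1.
rewrite normrM normrX xi normrM Hsgn mul1r in eq2.
set d := (scycle_deg k s m i)%:R in eq2 HY.
have le1 : `|\sum_(j < m | i \in scycle_edge k s m j) \prod_(v in scycle_edge k s m j :\ i) x v|
   <= T ^+ (k - 1) * ((lamY - d) * Y i ^+ (k - 1)).
  apply: (le_trans (ler_norm_sum _ _ _)).
  rewrite (_ : (lamY - d) * Y i ^+ (k - 1) = \sum_(j < m | i \in scycle_edge k s m j) \prod_(v in scycle_edge k s m j :\ i) Y v); last first.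
    by rewrite mulrBl HY /d addrC addKr.
  rewrite mulr_sumr; apply: ler_sum => j hj.
  rewrite normr_prod.
  have hp : \prod_(v in scycle_edge k s m j :\ i) `|x v| <= \prod_(v in scycle_edge k s m j :\ i) (T * Y v).
    by apply: ler_prod => v _; rewrite normr_ge0 HT.
  apply: (le_trans hp).
  by rewrite big_split /= prodr_const Hcard.
rewrite -eq2 exprMn in le1.
have W0 : 0 < T ^+ (k - 1) * Y i ^+ (k - 1) by rewrite mulr_gt0 // exprn_gt0.
have le2 : `|mu - d| <= lamY - d.
  rewrite -(ler_pM2r W0).
  move: le1 => h; apply: (le_trans h); rewrite le_eqVlt; apply/orP; left; apply/eqP; ring.
have := ler_norm (mu - d); lra.
Qed.

Theorem theorem5p1 (R : realType) (k s m : nat)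
  (hk : (3 <= k)%N) (hs1 : (1 <= s)%N) (hs2 : (2 * s < k)%N)
  (hn : (2 * k - s <= m * (k - s))%N) :
  exists alpha : R,
    [/\ 0 < alpha < 1,
        2 * alpha ^+ k + alpha ^+ (2 * s) - 1 = 0,
        (forall beta : R, 0 < beta < 1 ->
           2 * beta ^+ k + beta ^+ (2 * s) - 1 = 0 -> beta = alpha),
        lambdaQ_is k s m (2 + 2 * alpha ^+ (k - 2 * s)) &
        (~~ odd k -> lambdaL_is k s m (2 + 2 * alpha ^+ (k - 2 * s)))].
Proof.
have q0 : (0 < k - s)%N by lia.
have m3 : (2 < m)%N.
  rewrite ltnNge; apply/negP => hm.
  have : (m * (k - s) <= 2 * (k - s))%N by rewrite leq_mul2r hm orbT.
  lia.
have m0 : (0 < m)%N by lia.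
have k0 : (0 < k)%N by lia.
have kn : (k <= m * (k - s))%N by lia.
have n0 : (0 < m * (k - s))%N by lia.
have [al /andP [al0 al1] Haleq] :
    exists2 al : R, 0 < al < 1 & 2 * al ^+ k + al ^+ (2 * s) - 1 = 0.
  pose p : {poly R} := 2%:P * 'X^k + 'X^(2 * s) - 1.
  have hpe : forall x, p.[x] = 2 * x ^+ k + x ^+ (2 * s) - 1.
    by move=> x; rewrite /p !hornerE.
  have p0 : p.[0] = -1.
    rewrite hpe !expr0n.
    have -> : (k == 0)%N = false by lia.
    have -> : (2 * s == 0)%N = false by lia.
    by rewrite /= mulr0 add0r sub0r.
  have p1 : p.[1] = 2 by rewrite hpe !expr1n mulr1 addrK.
  have hp01 : p.[0] <= 0 <= p.[1] by rewrite p0 p1; apply/andP; split; lra.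
  have [x /andP [x0 x1] /rootP rx] := @poly_ivt R p 0 1 ler01 hp01.
  exists x; last by rewrite -hpe.
  apply/andP; split.
  - rewrite lt_neqAle x0 andbT; apply/negP => /eqP h; move: rx; rewrite -h p0; lra.
  - rewrite lt_neqAle x1 andbT; apply/negP => /eqP h; move: rx; rewrite h p1; lra.
exists al.
have al0' : al != 0 by rewrite gt_eqF.
set P := al ^+ (k - 2 * s).
set L := 2 + 2 * P.
pose g := fun u : nat => if (cls k s m u < s)%N then 1 else al.
pose y := fun v : 'I_(m * (k - s)) => g v.
have ypos : forall v, 0 < y v by move=> v; rewrite /y /g; case: ifP.
have yprod : forall j : 'I_m, \prod_(v in scycle_edge k s m j) y v = P.
  move=> j; rewrite /y (@edge_prod R k s m j g k0 kn).
  rewrite (eq_bigr (fun t : 'I_k => if ((t : nat) %% (k - s) < s)%N then 1 else al)).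
    by rewrite prod_cnt.
  by move=> t _; rewrite /g cls_vtx.
have ycard : forall i (j : 'I_m), i \in scycle_edge k s m j ->
    #|scycle_edge k s m j :\ i| = (k - 1)%N.
  move=> i j hij; have := cardsD1 i (scycle_edge k s m j).
  rewrite hij (@edge_card k s m j k0 kn); lia.
have alg : forall i, L * y i ^+ (k - 1) =
    (scycle_deg k s m i)%:R * y i ^+ (k - 1) + (scycle_deg k s m i)%:R * (P / y i).
  move=> i; rewrite (@deg_cls k s m i hs1 hs2 m3) /y /g; case: ifP => _.
  - by rewrite expr1n divr1 /L; ring.
  - set a := al ^+ (k - 2 * s - 1). set z := al ^+ (2 * s).
    have e1 : al ^+ (k - 1) = a * z by rewrite -exprD; congr (_ ^+ _); lia.
    have e2 : P = a * al by rewrite /P -exprSr; congr (_ ^+ _); lia.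
    have e3 : al ^+ k = a * al * z by rewrite -e2 /P -exprD; congr (_ ^+ _); lia.
    rewrite e1 /L e2 mulfK //.
    rewrite e3 in Haleq.
    have h : a * (2 * (a * al * z) + z - 1) = 0 by rewrite Haleq mulr0.
    apply/eqP; rewrite -subr_eq0; apply/eqP; rewrite -h; ring.
have yeq : forall i, L * y i ^+ (k - 1) = (scycle_deg k s m i)%:R * y i ^+ (k - 1)
   + \sum_(j < m | i \in scycle_edge k s m j) \prod_(v in scycle_edge k s m j :\ i) y v.
  by move=> i; rewrite (@sum_edges R k s m y P i _ yprod) ?alg // gt_eqF.
pose i0 : 'I_(m * (k - s)) := Ordinal n0.
split => //.
- by rewrite al0 al1.
- move=> beta /andP [b0 b1] hb.
  case: (ltgtP beta al) => // h.
  + have h1 : beta ^+ k < al ^+ k by rewrite ltrXn2r ?ltW //; lia.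
    have h2 : beta ^+ (2 * s) < al ^+ (2 * s) by rewrite ltrXn2r ?ltW //; lia.
    lra.
  + have h1 : al ^+ k < beta ^+ k by rewrite ltrXn2r ?ltW //; lia.
    have h2 : al ^+ (2 * s) < beta ^+ (2 * s) by rewrite ltrXn2r ?ltW //; lia.
    lra.
- split.
  + exists y; split; first by exists i0; rewrite gt_eqF.
    by move=> i; rewrite mul1r yeq.
  + move=> mu Hmu; exact: (@ub R k s m y L 1 mu ypos yeq ycard (normr1 _) Hmu).
- move=> hodd; split; last first.
    move=> mu Hmu; exact: (@ub R k s m y L (-1) mu ypos yeq ycard (normrN1 _) Hmu).
  pose sg := fun u : nat => if (cls k s m u == s)%N then -1 else 1 : R.
  pose x := fun v : 'I_(m * (k - s)) => sg v * y v.
  have xprod : forall j : 'I_m, \prod_(v in scycle_edge k s m j) x v = - P.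
    move=> j; rewrite /x /y (@edge_prod R k s m j (fun u => sg u * g u) k0 kn).
    rewrite (eq_bigr (fun t : 'I_k => (if ((t : nat) %% (k - s) == s)%N then -1 else 1)
                 * (if ((t : nat) %% (k - s) < s)%N then 1 else al))).
      by rewrite big_split /= prod_sgn // prod_cnt // mulN1r.
    by move=> t _; rewrite /sg /g cls_vtx.
  have xnz : forall i, x i != 0.
    move=> i; apply: mulf_neq0; last by rewrite gt_eqF.
    by rewrite /sg; case: ifP => _; rewrite ?oppr_eq0 ?oner_eq0.
  exists x; split; first by exists i0.
  move=> i; rewrite (@sum_edges R k s m x (- P) i (xnz i) xprod).
  have ok1 : odd (k - 1) by rewrite oddB // (negbTE hodd).
  have hA := alg i; rewrite /x /sg; case: ifP => _.
  + rewrite !mulN1r exprNn -signr_odd ok1 expr1 mulN1r invrN mulrNN !mulrN hA; ring.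
  + rewrite !mul1r mulNr hA; ring.
Qed.
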